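(* Let $3\le n\le k$ be integers and let $X$ be the discrete-time Markov chain on $\mathbb{N}^{n-1}$ described in the context. If $X$ is stable and $\mathbf{Q}$ is a random vector distributed according to its stationary distribution, then $$\mathbb{E}[|\mathbf{Q}|]=\frac{k(n-1)}{2(k-n)}.$$
   Context: $\mathbb{N}=\{0,1,2,\dots\}$; for $\mathbf{x}\in\mathbb{N}^{n-1}$, $|\mathbf{x}|=x_1+\dots+x_{n-1}$. $\mathbf{0}$, $\mathbf{1}$ are the all-zero and all-one vectors of dimension $n-1$, $\mathbf{e}_l$ the $l$-th unit vector. For $j=0,\dots,n-1$, $R_j$ is the set of $\mathbf{x}\in\mathbb{N}^{n-1}$ with exactly $j$ zero entries. $X$ is the Markov chain on $\mathbb{N}^{n-1}$ with nonzero transition probabilities: from $\mathbf{x}\in R_0$, to $\mathbf{x}-\mathbf{1}$ w.p. $\frac{k-(n-1)}{k}$ and to $\mathbf{x}+\mathbf{e}_l$ w.p. $\frac1k$ ($l=1,\dots,n-1$); from $\mathbf{x}\in R_j$, $1\le j\le n-2$, to $\mathbf{x}+\mathbf{e}_l$ w.p. $\frac{k-(n-1-j)}{kj}$ if $x_l=0$ and w.p. $\frac1k$ if $x_l\ge1$; from $\mathbf{0}$ to $\mathbf{e}_l$ w.p. $\frac1{n-1}$. Stable means positive recurrent. *)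

(* Defs.v *)
From mathcomp Require Import all_boot all_order all_algebra.
From mathcomp Require Import all_classical all_reals all_analysis.
Set Implicit Arguments. Unset Strict Implicit. Unset Printing Implicit Defensive.
Import Order.TTheory GRing.Theory Num.Theory.
Local Open Scope ring_scope.

Definition state (n : nat) := {ffun 'I_(n - 1) -> nat}.

Definition vnorm (n : nat) (x : state n) : nat := (\sum_(i < n - 1) x i)%N.

(* number of zero entries of x : x \in R_j iff nzeros x = j *)
Definition nzeros (n : nat) (x : state n) : nat := #|[set i | x i == 0%N]|.

Definition incr (n : nat) (x : state n) (l : 'I_(n - 1)) : state n :=
  [ffun i => (x i + (i == l))%N].

(* x - 1 (only used for x in R_0) *)
Definition decr (n : nat) (x : state n) : state n := [ffun i => (x i).-1].

Definition up_prob (R : realType) (n k : nat) (x : state n) (l : 'I_(n - 1)) : R :=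
  let j := nzeros x in
  if j == (n - 1)%N then 1 / (n - 1)%:R
  else if x l == 0%N then
    (k%:R - (n - 1 - j)%:R) / (k%:R * j%:R)           (* x in R_j, 1 <= j <= n-2, x_l = 0 *)
  else 1 / k%:R.

Definition down_prob (R : realType) (n k : nat) (x : state n) : R :=
  if nzeros x == 0%N then (k%:R - (n - 1)%:R) / k%:R else 0.

Definition P (R : realType) (n k : nat) (x y : state n) : R :=
  \sum_(l < n - 1) (if y == incr x l then up_prob R k x l else 0)
  + (if y == decr x then down_prob R k x else 0).

Local Open Scope ereal_scope.

(* taboo survival probabilities: surv m y = P_y(X_1 <> x, ..., X_m <> x) *)
Fixpoint surv (R : realType) (n k : nat) (x : state n) (m : nat) (y : state n)
  : \bar R :=
  match m with
  | 0%N => 1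
  | m'.+1 => \esum_(z in [set z : state n | z <> x]) ((P R k y z)%:E * surv R k x m' z)
  end.

(* expected return time E_x[T_x^+] = sum_{m>=0} P_x(T_x^+ > m) *)
Definition exp_return_time (R : realType) (n k : nat) (x : state n) : \bar R :=
  \sum_(0 <= m <oo) surv R k x m x.

Definition positive_recurrent_state (R : realType) (n k : nat) (x : state n) : Prop :=
  exp_return_time R k x < +oo.

Definition stable (R : realType) (n k : nat) : Prop :=
  forall x : state n, positive_recurrent_state R k x.

Definition stationary (R : realType) (n k : nat) (pi : state n -> R) : Prop :=
  [/\ forall x, (0 <= pi x)%R,
      \esum_(x in [set: state n]) (pi x)%:E = 1 &
      forall y, (pi y)%:E = \esum_(x in [set: state n]) (pi x * P R k x y)%:E].

Definition mean_norm (R : realType) (n : nat) (pi : state n -> R) : \bar R :=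
  \esum_(x in [set: state n]) (pi x * (vnorm x)%:R)%:E.

(* Main.v *)
Require Import Defs.
From mathcomp Require Import all_boot all_order all_algebra.
From mathcomp Require Import all_classical all_reals all_analysis.
From mathcomp Require Import ring lra zify.
Import Order.TTheory GRing.Theory Num.Theory.
Local Open Scope ring_scope.

Lemma sum_sub (T : eqType) (V : nmodType) (s t : seq T) (F : T -> V) :
  uniq s -> uniq t -> {subset s <= t} ->
  \sum_(x <- t) F x = \sum_(x <- s) F x + \sum_(x <- t | x \notin s) F x.
Proof.
move=> us ut st; rewrite (bigID (fun x => x \in s)) /=; congr (_ + _).
rewrite -big_filter; apply: perm_big; apply: uniq_perm.
- exact: filter_uniq.
- exact: us.
move=> x; rewrite mem_filter; case: (boolP (x \in s)) => //= /st ->//.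
Qed.

Lemma le_sum_sub (T : eqType) (R : numDomainType) (s t : seq T) (F : T -> R) :
  uniq s -> uniq t -> {subset s <= t} -> (forall x, 0 <= F x) ->
  \sum_(x <- s) F x <= \sum_(x <- t) F x.
Proof.
move=> us ut st F0; rewrite (@sum_sub _ _ s t F us ut st) lerDl.
by apply: sumr_ge0 => x _.
Qed.

Definition emb {n N : nat} (z : {ffun 'I_(n-1) -> 'I_N.+1}) : state n :=
  [ffun i => nat_of_ord (z i)].
Definition boxs (n N : nat) : seq (state n) :=
  map (@emb n N) (enum {: {ffun 'I_(n-1) -> 'I_N.+1}}).
Definition inbox {n : nat} (N : nat) (x : state n) := [forall i, (x i <= N)%N].

Lemma mem_boxs n N x : (x \in boxs n N) = inbox N x.
Proof.
apply/idP/idP.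
  case/mapP => z _ ->; apply/forallP => i; rewrite ffunE.
  by have := ltn_ord (z i).
move=> /forallP H; apply/mapP.
exists [ffun i => (inord (x i) : 'I_N.+1)]; first by rewrite mem_enum.
apply/ffunP => i; rewrite !ffunE inordK //; by rewrite ltnS.
Qed.

Lemma uniq_boxs n N : uniq (boxs n N).
Proof.
rewrite map_inj_uniq ?enum_uniq // => z1 z2 /ffunP H; apply/ffunP => i.
by apply: val_inj; have := H i; rewrite !ffunE.
Qed.

Lemma inboxW n N M (x : state n) : (N <= M)%N -> inbox N x -> inbox M x.
Proof. by move=> NM /forallP H; apply/forallP => i; apply: leq_trans (H i) NM. Qed.

Lemma seq_in_box n (r : seq (state n)) : exists N, forall x, x \in r -> inbox N x.
Proof.
exists (\max_(x <- r) \max_(i < n - 1) x i)%N => x xr; apply/forallP => i.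
apply: leq_trans (_ : \max_(i < n - 1) x i <= _)%N.
  exact: (@leq_bigmax_cond _ xpredT (fun j => x j) i).
by rewrite (big_rem x xr) /= leq_maxl.
Qed.

Lemma esum_ge_seq (R : realType) (T : choiceType) (F : T -> R) (s : seq T) :
  uniq s -> ((\sum_(x <- s) F x)%:E <= \esum_(x in [set: T]) (F x)%:E)%E.
Proof.
move=> us; apply: esum_ge; exists [set` s]%classic; first by split; [exact: finite_seq|].
by rewrite -fsbig_seq // sumEFin.
Qed.

Lemma esum_le_seq (R : realType) (T : choiceType) (F : T -> R) (v : \bar R) :
  (forall s : seq T, uniq s -> ((\sum_(x <- s) F x)%:E <= v)%E) ->
  (\esum_(x in [set: T]) (F x)%:E <= v)%E.
Proof.
move=> H; apply: ge_ereal_sup => _ [X [finX _] <-].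
rewrite fsbig_finite // sumEFin; apply: H; exact: finmap.fset_uniq.
Qed.

Lemma esum_le_box (R : realType) (n : nat) (F : state n -> R) (v : \bar R) :
  (forall x, 0 <= F x) ->
  (forall N, ((\sum_(x <- boxs n N) F x)%:E <= v)%E) ->
  (\esum_(x in [set: state n]) (F x)%:E <= v)%E.
Proof.
move=> F0 H; apply: esum_le_seq => s us.
have [N HN] := @seq_in_box n s.
apply: le_trans (H N); rewrite lee_fin; apply: le_sum_sub => //.
  exact: uniq_boxs.
by move=> x /HN; rewrite mem_boxs.
Qed.

Lemma esum_seq_eq (R : realType) (T : choiceType) (F : T -> R) (s : seq T) :
  uniq s -> (forall x, 0 <= F x) -> (forall x, x \notin s -> F x = 0) ->
  \esum_(x in [set: T]) (F x)%:E = (\sum_(x <- s) F x)%:E.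
Proof.
move=> us F0 Fs; apply/le_anti/andP; split; last exact: esum_ge_seq.
apply: esum_le_seq => r ur; rewrite lee_fin.
rewrite (bigID (fun x => x \in s)) /= [X in _ + X]big1 ?addr0; last first.
  by move=> x /Fs.
rewrite -big_filter; apply: le_sum_sub => //.
- exact: filter_uniq.
- by move=> x; rewrite mem_filter => /andP[].
Qed.
Definition Sr (R : realType) {n : nat} (x : state n) : R := \sum_(i < n - 1) (x i)%:R.
Definition Q2 (R : realType) {n : nat} (x : state n) : R := \sum_(i < n - 1) (x i)%:R ^+ 2.
Definition gg (R : realType) {n : nat} (x : state n) : R := n%:R * Q2 R x - Sr R x ^+ 2.
Definition Pf (R : realType) {n : nat} (k : nat) (f : state n -> R) (x : state n) : R :=
  \sum_(l < n - 1) up_prob R k x l * f (incr x l) + down_prob R k x * f (decr x).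

Lemma nzeros_le n (x : state n) : (nzeros x <= n - 1)%N.
Proof. by rewrite /nzeros; apply: leq_trans (max_card _) _; rewrite card_ord. Qed.

Lemma nzeros_full n (x : state n) : nzeros x = (n - 1)%N -> forall i, x i = 0%N.
Proof.
move=> H i; have : [set i | x i == 0%N] = [set: 'I_(n - 1)]%SET.
  by apply/eqP; rewrite eqEcard finset.subsetT finset.cardsT card_ord /=; rewrite /nzeros in H; rewrite H.
by move/setP/(_ i); rewrite !inE => /eqP.
Qed.

Lemma nzeros0 n (x : state n) : nzeros x = 0%N -> forall i, x i != 0%N.
Proof.
move=> /cards0_eq /setP H i; have := H i; rewrite !inE.
by move=> ->.
Qed.

Lemma sum_if0 (R : realType) n (x : state n) (A B : R) :
  \sum_(l < n - 1) (if x l == 0%N then A else B)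
  = (nzeros x)%:R * A + ((n - 1) - nzeros x)%:R * B.
Proof.
rewrite (bigID (fun l => x l == 0%N)) /=.
rewrite (eq_bigr (fun _ => A)); last by move=> l ->.
rewrite [X in _ + X](eq_bigr (fun _ => B)); last by move=> l /negbTE ->.
rewrite !sumr_const -[A *+ _]mulr_natl -[B *+ _]mulr_natl.
have E1 : #|[pred i : 'I_(n - 1) | x i == 0%N]| = nzeros x.
  by rewrite /nzeros cardsE.
have E2 : #|[pred i : 'I_(n - 1) | x i != 0%N]| = (n - 1 - nzeros x)%N.
  have HC := cardC [pred i : 'I_(n - 1) | x i == 0%N]; rewrite card_ord E1 in HC.
  apply: (@addnI (nzeros x)); rewrite subnKC ?nzeros_le // -[RHS]HC; congr (_ + _).
by congr (_%:R * _ + _%:R * _); [exact: E1 | exact: E2].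
Qed.

Lemma upE (R : realType) n k (x : state n) l : up_prob R k x l =
  if nzeros x == (n - 1)%N then 1 / (n - 1)%:R
  else if x l == 0%N then (k%:R - (n - 1 - nzeros x)%:R) / (k%:R * (nzeros x)%:R)
  else 1 / k%:R.
Proof. by []. Qed.

Lemma up_ge0 (R : realType) n k (x : state n) l : (n <= k)%N -> 0 <= up_prob R k x l.
Proof.
move=> nk; rewrite upE; case: ifP => _; first by rewrite divr_ge0.
case: ifP => _; last by rewrite divr_ge0.
apply: divr_ge0; last by rewrite mulr_ge0.
rewrite subr_ge0 ler_nat; apply: leq_trans nk; lia.
Qed.

Lemma down_ge0 (R : realType) n k (x : state n) : (n <= k)%N -> 0 <= down_prob R k x.
Proof.
move=> nk; rewrite /down_prob; case: ifP => _ //.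
apply: divr_ge0 => //; rewrite subr_ge0 ler_nat; lia.
Qed.

Lemma down_gt0 (R : realType) n k (x : state n) : (3 <= n)%N -> (n <= k)%N -> nzeros x = 0%N ->
  0 < down_prob R k x.
Proof.
move=> n3 nk z; rewrite /down_prob z eqxx; apply: divr_gt0; last by rewrite ltr0n; lia.
rewrite subr_gt0 ltr_nat; lia.
Qed.

Lemma down_nz (R : realType) n k (x : state n) : nzeros x != 0%N -> down_prob R k x = 0.
Proof. by rewrite /down_prob => /negbTE ->. Qed.

Lemma up_x (R : realType) n k (x : state n) l : (3 <= n)%N ->
  up_prob R k x l * (x l)%:R = (x l)%:R / k%:R.
Proof.
move=> n3; rewrite upE; case: (eqVneq (x l) 0%N) => [->|xl]; first by rewrite !mulr0 mul0r.
case: eqP => [/nzeros_full/(_ l)/eqP|_]; first by rewrite (negbTE xl).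
by rewrite mul1r mulrC.
Qed.

Lemma up_R0 (R : realType) n k (x : state n) l : (3 <= n)%N -> nzeros x = 0%N ->
  up_prob R k x l = 1 / k%:R.
Proof.
move=> n3 z; rewrite upE z; case: eqP => [|_]; first lia.
by rewrite (negbTE (@nzeros0 _ x z l)).
Qed.

Lemma rowsum (R : realType) n k (x : state n) : (3 <= n)%N -> (n <= k)%N ->
  \sum_(l < n - 1) up_prob R k x l + down_prob R k x = 1.
Proof.
move=> n3 nk.
have k0 : (k%:R : R) != 0 by rewrite pnatr_eq0; lia.
have d0 : ((n - 1)%:R : R) != 0 by rewrite pnatr_eq0; lia.
case: (eqVneq (nzeros x) 0%N) => z.
  rewrite (eq_bigr (fun _ => 1 / k%:R)); last by move=> l _; rewrite up_R0.
  rewrite sumr_const card_ord /down_prob z eqxx -[(1 / k%:R) *+ _]mulr_natl.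
  by field.
rewrite down_nz // addr0.
case: (eqVneq (nzeros x) (n - 1)%N) => f.
  rewrite (eq_bigr (fun _ => 1 / (n - 1)%:R)); last by move=> l _; rewrite upE f eqxx.
  by rewrite sumr_const card_ord -[(1 / _) *+ _]mulr_natl; field.
rewrite (eq_bigr (fun l => if x l == 0%N then (k%:R - (n - 1 - nzeros x)%:R) / (k%:R * (nzeros x)%:R) else 1 / k%:R)); last first.
  by move=> l _; rewrite upE (negbTE f).
rewrite sum_if0.
have j0 : ((nzeros x)%:R : R) != 0 by rewrite pnatr_eq0.
have jle := @nzeros_le _ x.
rewrite natrB //.
field; by rewrite j0 k0.
Qed.

Lemma Sr_incr (R : realType) n (x : state n) l : Sr R (incr x l) = Sr R x + 1.
Proof.
rewrite /Sr (bigD1 l) //= [in RHS](bigD1 l) //= ffunE eqxx natrD /=.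
have -> : \sum_(i < n - 1 | i != l) ((incr x l) i)%:R =
          \sum_(i < n - 1 | i != l) ((x i)%:R : R).
  apply: eq_bigr => i il; by rewrite ffunE (negbTE il) addn0.

ring.
Qed.

Lemma Q2_incr (R : realType) n (x : state n) l :
  Q2 R (incr x l) = Q2 R x + 2 * (x l)%:R + 1.
Proof.
rewrite /Q2 (bigD1 l) //= [in RHS](bigD1 l) //= ffunE eqxx natrD /=.
have -> : \sum_(i < n - 1 | i != l) ((incr x l) i)%:R ^+ 2 =
          \sum_(i < n - 1 | i != l) ((x i)%:R ^+ 2 : R).
  apply: eq_bigr => i il; by rewrite ffunE (negbTE il) addn0.
ring.
Qed.

Lemma decr_pos (R : realType) n (x : state n) i : nzeros x = 0%N ->
  (((decr x) i)%:R : R) = (x i)%:R - 1.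
Proof.
move=> z; have h := @nzeros0 _ x z i; rewrite ffunE -subn1 natrB ?lt0n // ?subn1 //.
Qed.

Lemma Sr_decr (R : realType) n (x : state n) : nzeros x = 0%N ->
  Sr R (decr x) = Sr R x - (n - 1)%:R.
Proof.
move=> z; rewrite /Sr (eq_bigr (fun i => (x i)%:R - 1)); last by move=> i _; rewrite decr_pos.
by rewrite sumrB sumr_const card_ord.
Qed.

Lemma Q2_decr (R : realType) n (x : state n) : nzeros x = 0%N ->
  Q2 R (decr x) = Q2 R x - 2 * Sr R x + (n - 1)%:R.
Proof.
move=> z; rewrite /Q2 /Sr.
rewrite (eq_bigr (fun i => (x i)%:R ^+ 2 + (- (2 * (x i)%:R) + 1))); last first.
  by move=> i _; rewrite decr_pos //; ring.
rewrite big_split /= big_split /= sumrN -mulr_sumr sumr_const card_ord.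
by rewrite -addrA.
Qed.

Lemma gg_incr (R : realType) n (x : state n) l :
  gg R (incr x l) = gg R x + 2 * n%:R * (x l)%:R + n%:R - 2 * Sr R x - 1.
Proof. rewrite /gg Sr_incr Q2_incr; ring. Qed.

Lemma gg_decr (R : realType) n (x : state n) : (1 <= n)%N -> nzeros x = 0%N ->
  gg R (decr x) = gg R x + (n - 1)%:R - 2 * Sr R x.
Proof.
move=> n1 z; rewrite /gg Sr_decr // Q2_decr //.
have hn : (n%:R : R) = (n - 1)%:R + 1 by rewrite natrB // subrK.
rewrite hn; ring.
Qed.

Lemma drift (R : realType) n k (x : state n) : (3 <= n)%N -> (n <= k)%N ->
  Pf R k (@gg R n) x = gg R x + (n - 1)%:R - (2 * (k%:R - n%:R) / k%:R) * Sr R x.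
Proof.
move=> n3 nk.
have k0 : (k%:R : R) != 0 by rewrite pnatr_eq0; lia.
have hn : (n%:R : R) = (n - 1)%:R + 1 by rewrite natrB // ?subrK //; lia.
have hd : down_prob R k x * gg R (decr x) =
          down_prob R k x * (gg R x + (n - 1)%:R - 2 * Sr R x).
  case: (eqVneq (nzeros x) 0%N) => z; first by rewrite gg_decr //; lia.
  by rewrite down_nz // !mul0r.
rewrite /Pf hd.
rewrite (eq_bigr (fun l => up_prob R k x l * (gg R x + (n - 1)%:R - 2 * Sr R x)
                        + 2 * n%:R * (up_prob R k x l * (x l)%:R))); last first.
  by move=> l _; rewrite gg_incr hn; ring.
rewrite big_split /= -mulr_suml -mulr_sumr.
rewrite [X in 2 * n%:R * X](eq_bigr (fun l => (x l)%:R / k%:R)); last by move=> l _; rewrite up_x.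
rewrite -mulr_suml -/(Sr R x).
have rs := @rowsum R n k x n3 nk.
have -> : \sum_(i < n - 1) up_prob R k x i = 1 - down_prob R k x by rewrite -rs addrK.
by rewrite hn; field.
Qed.

Lemma sum_pick (R : realType) (T : eqType) (s : seq T) (z : T) (c : R) (f : T -> R) :
  uniq s -> (z \notin s -> f z = 0) ->
  \sum_(y <- s) (if y == z then c else 0) * f y = c * f z.
Proof.
move=> us fz; case: (boolP (z \in s)) => zs.
  rewrite (bigD1_seq z) //= eqxx big1 ?addr0 // => y /negbTE ->; by rewrite mul0r.
rewrite big1_seq ?fz ?mulr0 // => y /andP[_ ys].
have : y != z by apply: contraNneq zs => <-.
by move/negbTE ->; rewrite mul0r.
Qed.

Lemma P_ge0 (R : realType) n k (x y : state n) : (n <= k)%N -> 0 <= P R k x y.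
Proof.
move=> nk; rewrite /P; apply: addr_ge0.
  by apply: sumr_ge0 => l _; case: ifP => _ //; apply: up_ge0.
by case: ifP => _ //; apply: down_ge0.
Qed.

Lemma P_out (R : realType) n k (x y : state n) N :
  inbox N y -> ~~ inbox N.+1 x -> P R k x y = 0.
Proof.
move=> /forallP yN; rewrite negb_forall => /existsP [i]; rewrite -ltnNge => xi.
rewrite /P big1 ?add0r; last first.
  move=> l _; case: eqP => // ey; move: (yN i); rewrite ey ffunE; lia.
case: eqP => // ey; move: (yN i); rewrite ey ffunE; lia.
Qed.

Lemma stat_fin (R : realType) n k (pi : state n -> R) N y :
  (n <= k)%N -> stationary k pi -> inbox N y ->
  pi y = \sum_(x <- boxs n N.+1) pi x * P R k x y.
Proof.
move=> nk [pi0 _ st] yN; have := st y.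
rewrite (@esum_seq_eq R _ (fun x => pi x * P R k x y) (boxs n N.+1)).
- by case.
- exact: uniq_boxs.
- by move=> x; rewrite mulr_ge0 // P_ge0.
- by move=> x; rewrite mem_boxs => xN; rewrite (@P_out R n k x y N yN xN) mulr0.
Qed.

Lemma balance (R : realType) n k (pi : state n -> R) N (f : state n -> R) :
  (n <= k)%N -> stationary k pi -> (forall y, ~~ inbox N y -> f y = 0) ->
  \sum_(y <- boxs n N) pi y * f y = \sum_(x <- boxs n N.+1) pi x * Pf R k f x.
Proof.
move=> nk st f0.
rewrite big_seq_cond (eq_bigr (fun y => \sum_(x <- boxs n N.+1) pi x * P R k x y * f y)); last first.
  move=> y /andP[yb _]; rewrite mem_boxs in yb.
  by rewrite (@stat_fin R n k pi N y nk st yb) mulr_suml.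
rewrite -big_seq_cond exchange_big /=; apply: eq_bigr => x _.
rewrite (eq_bigr (fun y => pi x * (P R k x y * f y))); last by move=> y _; rewrite mulrA.
rewrite -mulr_sumr; congr (_ * _).
rewrite /P (eq_bigr (fun y => \sum_(l < n - 1) (if y == incr x l then up_prob R k x l else 0) * f y
   + (if y == decr x then down_prob R k x else 0) * f y)); last first.
  by move=> y _; rewrite mulrDl mulr_suml.
rewrite big_split /= exchange_big /= /Pf; congr (_ + _).
  apply: eq_bigr => l _; apply: sum_pick; first exact: uniq_boxs.
  by rewrite mem_boxs; apply: f0.
apply: sum_pick; first exact: uniq_boxs.
by rewrite mem_boxs; apply: f0.
Qed.

Set Implicit Arguments. Unset Strict Implicit.

Lemma sum_le_single (R : realType) (T : eqType) (s : seq T) (F : T -> R) x :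
  uniq s -> x \in s -> (forall y, 0 <= F y) -> F x <= \sum_(y <- s) F y.
Proof.
move=> us xs F0; rewrite (bigD1_seq x) //= lerDl.
by apply: sumr_ge0 => y _.
Qed.

Lemma box_sub n N M : (N <= M)%N -> {subset boxs n N <= boxs n M}.
Proof. by move=> NM x; rewrite !mem_boxs; apply: inboxW. Qed.

Lemma box_le (R : realType) n N M (F : state n -> R) : (N <= M)%N -> (forall x, 0 <= F x) ->
  \sum_(x <- boxs n N) F x <= \sum_(x <- boxs n M) F x.
Proof. move=> NM F0; apply: le_sum_sub => //; [exact: uniq_boxs|exact: uniq_boxs|exact: box_sub]. Qed.

Lemma box_split (R : realType) n N M (F : state n -> R) : (N <= M)%N ->
  \sum_(x <- boxs n M) F x = \sum_(x <- boxs n N) F x + \sum_(x <- boxs n M | ~~ inbox N x) F x.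
Proof.
move=> NM; rewrite (@sum_sub _ _ (boxs n N) (boxs n M) F); [|exact: uniq_boxs|exact: uniq_boxs|exact: box_sub].
by congr (_ + _); apply: eq_bigl => x; rewrite mem_boxs.
Qed.

Lemma Sr_ge_coord (R : realType) n (x : state n) i : ((x i)%:R : R) <= Sr R x.
Proof. by apply: (@sum_le_single R _ (index_enum _) (fun j => (x j)%:R)); rewrite ?index_enum_uniq ?mem_index_enum. Qed.

Lemma Q2_ge_coord (R : realType) n (x : state n) i : ((x i)%:R : R) <= Q2 R x.
Proof.
apply: le_trans (_ : (x i)%:R ^+ 2 <= _).
  rewrite -natrX ler_nat; case: (x i) => // m; rewrite expnS; lia.
by apply: (@sum_le_single R _ (index_enum _) (fun j => (x j)%:R ^+ 2)); rewrite ?index_enum_uniq ?mem_index_enum // => j; exact: sqr_ge0.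
Qed.

Lemma Sr_ge0 (R : realType) n (x : state n) : 0 <= Sr R x.
Proof. by apply: sumr_ge0. Qed.

Lemma Q2_ge0 (R : realType) n (x : state n) : 0 <= Q2 R x.
Proof. by apply: sumr_ge0 => i _; exact: sqr_ge0. Qed.

Lemma Sr_box (R : realType) n N (x : state n) : inbox N x -> Sr R x <= (n - 1)%:R * N%:R.
Proof.
move=> /forallP H; rewrite /Sr; apply: le_trans (_ : \sum_(i < n - 1) (N%:R : R) <= _).
  by apply: ler_sum => i _; rewrite ler_nat.
by rewrite sumr_const card_ord mulr_natl.
Qed.

Lemma Q2_box (R : realType) n N (x : state n) : inbox N x -> Q2 R x <= (n - 1)%:R * N%:R ^+ 2.
Proof.
move=> /forallP H; rewrite /Q2; apply: le_trans (_ : \sum_(i < n - 1) (N%:R ^+ 2 : R) <= _).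
  by apply: ler_sum => i _; rewrite -!natrX ler_nat leq_exp2r.
by rewrite sumr_const card_ord mulr_natl.
Qed.

Lemma CS (R : realType) n (x : state n) : Sr R x ^+ 2 <= (n - 1)%:R * Q2 R x.
Proof.
rewrite /Sr /Q2 expr2 mulr_suml.
have H : forall i j : 'I_(n - 1), ((x i)%:R * (x j)%:R : R) <= ((x i)%:R ^+ 2 + (x j)%:R ^+ 2) / 2.
  move=> i j; set a : R := (x i)%:R; set b : R := (x j)%:R.
  have := sqr_ge0 (a - b); rewrite ler_pdivlMr //; nra.
apply: le_trans (_ : \sum_(i < n - 1) \sum_(j < n - 1) ((x i)%:R ^+ 2 + (x j)%:R ^+ 2) / 2 <= _).
  by apply: ler_sum => i _; rewrite mulr_sumr; apply: ler_sum => j _; apply: H.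
rewrite (eq_bigr (fun i => ((n - 1)%:R * (x i)%:R ^+ 2 + \sum_(j < n - 1) (x j)%:R ^+ 2) / 2)); last first.
  move=> i _; rewrite -mulr_suml big_split /= sumr_const card_ord mulr_natl //.
rewrite -mulr_suml big_split /= -mulr_sumr sumr_const card_ord mulr_natl.
set q := \sum_(i < n - 1) _.
rewrite -mulr_natr; apply: le_trans (_ : (q * (n - 1)%:R + q * (n - 1)%:R) / 2 <= _).
  by rewrite mulr_natr.
set a := q * _; rewrite ler_pdivrMr //; lra.
Qed.

Lemma gg_ge (R : realType) n (x : state n) : (1 <= n)%N -> Q2 R x <= gg R x.
Proof.
move=> n1; rewrite /gg; have := CS R x; have := Q2_ge0 R x.
have hn : (n%:R : R) = (n - 1)%:R + 1 by rewrite natrB // subrK.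
rewrite hn; set q := Q2 R x; set s := Sr R x ^+ 2; set d := (n - 1)%:R; lra.
Qed.

Lemma gg_ge0 (R : realType) n (x : state n) : (1 <= n)%N -> 0 <= gg R x.
Proof. move=> n1; exact: le_trans (Q2_ge0 R x) (gg_ge R x n1). Qed.

Lemma gg_le (R : realType) n (x : state n) : gg R x <= n%:R * Q2 R x.
Proof. by rewrite /gg lerBlDr lerDl sqr_ge0. Qed.

Lemma gg_box (R : realType) n N (x : state n) : inbox N x ->
  gg R x <= n%:R * ((n - 1)%:R * N%:R ^+ 2).
Proof. move=> xN; apply: le_trans (gg_le R x) _; apply: ler_wpM2l => //; exact: Q2_box. Qed.

Lemma inbox_incr n N (x : state n) l : inbox N x -> inbox N.+1 (incr x l).
Proof. move=> /forallP H; apply/forallP => i; rewrite ffunE; have := H i; case: (i == l) => /=; lia. Qed.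

Lemma inbox_decr n N (x : state n) : inbox N x -> inbox N (decr x).
Proof. move=> /forallP H; apply/forallP => i; rewrite ffunE; have := H i; lia. Qed.

Lemma notinbox n N (x : state n) : ~~ inbox N x -> exists i, (N < x i)%N.
Proof. by rewrite negb_forall => /existsP [i]; rewrite -ltnNge; exists i. Qed.

Lemma Pf_mono (R : realType) n k (f g : state n -> R) (x : state n) : (n <= k)%N ->
  (forall y, f y <= g y) -> Pf R k f x <= Pf R k g x.
Proof.
move=> nk fg; rewrite /Pf; apply: lerD.
  by apply: ler_sum => l _; apply: ler_wpM2l; [exact: up_ge0|].
by apply: ler_wpM2l; [exact: down_ge0|].
Qed.

Lemma Pf_const (R : realType) n k (c : R) (x : state n) : (3 <= n)%N -> (n <= k)%N ->
  Pf R k (fun _ => c) x = c.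
Proof.
move=> n3 nk; rewrite /Pf -mulr_suml -mulrDl.
by rewrite (@rowsum R n k x n3 nk) mul1r.
Qed.

Lemma Pf_subc (R : realType) n k (f : state n -> R) (c : R) (x : state n) : (3 <= n)%N -> (n <= k)%N ->
  Pf R k (fun y => f y - c) x = Pf R k f x - c.
Proof.
move=> n3 nk; have := @Pf_const R n k c x n3 nk; rewrite /Pf => H.
rewrite -[in RHS]H; under eq_bigr do rewrite mulrBr.
by rewrite sumrB mulrBr; ring.
Qed.

Lemma Pf_ge0 (R : realType) n k (f : state n -> R) (x : state n) : (n <= k)%N ->
  (forall y, 0 <= f y) -> 0 <= Pf R k f x.
Proof.
move=> nk f0; rewrite /Pf; apply: addr_ge0; last by apply: mulr_ge0; [exact: down_ge0|].
by apply: sumr_ge0 => l _; apply: mulr_ge0; [exact: up_ge0|].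
Qed.

Definition Tb (R : realType) n (pi : state n -> R) N := \sum_(x <- boxs n N) pi x.
Definition Ub (R : realType) n (pi : state n -> R) N := \sum_(x <- boxs n N) pi x * Sr R x.

Lemma T_le1 (R : realType) n k (pi : state n -> R) N : stationary k pi -> Tb pi N <= 1.
Proof.
move=> [_ s1 _]; have := @esum_ge_seq R _ pi (boxs n N) (uniq_boxs n N).
by rewrite s1 lee_fin.
Qed.

Lemma T_ge0 (R : realType) n k (pi : state n -> R) N : stationary k pi -> 0 <= Tb pi N.
Proof. by move=> [p0 _ _]; apply: sumr_ge0. Qed.

Lemma boundA (R : realType) n k (pi : state n -> R) N :
  (3 <= n)%N -> (n <= k)%N -> stationary k pi ->
  (2 * (k%:R - n%:R) / k%:R) * Ub pi N <= (n - 1)%:R.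
Proof.
move=> n3 nk st; have [p0 _ _] := st.
set c : R := 2 * (k%:R - n%:R) / k%:R; set d : R := (n - 1)%:R.
have c0 : 0 <= c.
  rewrite /c; apply: divr_ge0 => //; apply: mulr_ge0 => //; rewrite subr_ge0 ler_nat //.
have d0 : 0 <= d by [].
set K : nat := (n * (n - 1) * N ^ 2 + N).+1.
have gK : forall x : state n, inbox N x -> gg R x < K%:R.
  move=> x xN; apply: le_lt_trans (gg_box R xN) _.
  rewrite -!natrX -!natrM ltr_nat /K; lia.
set f := fun y : state n => Num.min (gg R y) K%:R - K%:R.
have fz : forall y, ~~ inbox K y -> f y = 0.
  move=> y /notinbox [i yi]; rewrite /f; apply/eqP; rewrite subr_eq0; apply/eqP.
  apply/min_idPr; apply: le_trans (gg_ge R y _); last lia.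
  apply: le_trans (Q2_ge_coord R y i); rewrite ler_nat; lia.
have bal := @balance R n k pi K f nk st fz.
have eqf : \sum_(x <- boxs n K.+1) pi x * f x = \sum_(x <- boxs n K) pi x * f x.
  rewrite (@box_split R n K K.+1 (fun x => pi x * f x)) // [X in _ + X]big1 ?addr0 //.
  by move=> y /fz ->; rewrite mulr0.
have key : forall x : state n, pi x * (Pf R k f x - f x) <=
    pi x * (if gg R x < K%:R then d - c * Sr R x else 0).
  move=> x; apply: ler_wpM2l => //.
  rewrite /f (@Pf_subc R n k (fun y => Num.min (gg R y) K%:R)) //.
  case: ifP => gx.
    rewrite (min_idPl (ltW gx)) opprB addrA subrK lerBlDr.
    apply: le_trans (@Pf_mono R n k _ (@gg R n) x nk _) _.
      by move=> y; rewrite ge_min lexx.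
    by rewrite drift // /c /d; lra.
  have gx' : K%:R <= gg R x by rewrite leNgt gx.
  rewrite (min_idPr gx') subrr subr0 subr_le0.
  rewrite -[X in _ <= X](@Pf_const R n k K%:R x) //.
  by apply: Pf_mono => // y; rewrite ge_min lexx orbT.
have H0 : 0 <= \sum_(x <- boxs n K.+1) pi x * (if gg R x < K%:R then d - c * Sr R x else 0).
  apply: le_trans (_ : \sum_(x <- boxs n K.+1) pi x * (Pf R k f x - f x) <= _).
    by rewrite (eq_bigr (fun x => pi x * Pf R k f x - pi x * f x)) ?sumrB ?eqf ?bal ?subrr // => x _; rewrite mulrBr.
  by apply: ler_sum => x _; apply: key.
set G := fun x : state n => if gg R x < K%:R then 1 else (0 : R).
have E1 : \sum_(x <- boxs n K.+1) pi x * (if gg R x < K%:R then d - c * Sr R x else 0)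
   = d * \sum_(x <- boxs n K.+1) pi x * G x - c * \sum_(x <- boxs n K.+1) pi x * G x * Sr R x.
  rewrite !mulr_sumr -sumrB; apply: eq_bigr => x _; rewrite /G; case: ifP => _; ring.
have E2 : \sum_(x <- boxs n K.+1) pi x * G x <= 1.
  apply: le_trans (T_le1 K.+1 st); apply: ler_sum => x _.
  by rewrite /G; case: ifP => _; rewrite ?mulr1 ?mulr0.
have E3 : Ub pi N <= \sum_(x <- boxs n K.+1) pi x * G x * Sr R x.
  apply: le_trans (_ : \sum_(x <- boxs n N) pi x * G x * Sr R x <= _).
    rewrite /Ub big_seq [X in _ <= X]big_seq; apply: ler_sum => x; rewrite mem_boxs => xN.
    by rewrite /G (gK x xN) mulr1.
  apply: box_le; first by rewrite /K; lia.
  move=> x; rewrite /G; case: ifP => _; rewrite ?mulr1 ?mulr0 ?mul0r //.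
  by apply: mulr_ge0 => //; exact: Sr_ge0.
rewrite E1 in H0.
apply: le_trans (ler_wpM2l c0 E3) _.
apply: le_trans (_ : d * \sum_(x <- boxs n K.+1) pi x * G x <= _); first by lra.
by rewrite -[X in _ <= X]mulr1; apply: ler_wpM2l.
Qed.

Lemma T_split (R : realType) n (pi : state n -> R) m :
  Tb pi m.+1 - Tb pi m = \sum_(x <- boxs n m.+1 | ~~ inbox m x) pi x.
Proof. by rewrite /Tb (@box_split R n m m.+1) // addrAC subrr add0r. Qed.

Lemma shell (R : realType) n k (pi : state n -> R) m : stationary k pi ->
  Ub pi m + (m.+1)%:R * (Tb pi m.+1 - Tb pi m) <= Ub pi m.+1.
Proof.
move=> [p0 _ _]; rewrite /Ub (@box_split R n m m.+1) // lerD2l T_split mulr_sumr.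
apply: ler_sum => x /notinbox [i xi]; rewrite mulrC; apply: ler_wpM2l => //.
by apply: le_trans (Sr_ge_coord R x i); rewrite ler_nat.
Qed.

Lemma boundB (R : realType) n k (pi : state n -> R) m :
  (3 <= n)%N -> (n <= k)%N -> stationary k pi ->
  (n - 1)%:R * Tb pi m - (2 * (k%:R - n%:R) / k%:R) * Ub pi m <=
  n%:R * ((n - 1)%:R * (m.+1)%:R ^+ 2) * (Tb pi m.+1 - Tb pi m).
Proof.
move=> n3 nk st; have [p0 _ _] := st.
set c : R := 2 * (k%:R - n%:R) / k%:R; set d : R := (n - 1)%:R.
set B : R := n%:R * (d * (m.+1)%:R ^+ 2).
set f := fun y : state n => if inbox m.+1 y then gg R y else 0.
have f0 : forall y, 0 <= f y by move=> y; rewrite /f; case: ifP => // _; apply: gg_ge0; lia.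
have fz : forall y, ~~ inbox m.+1 y -> f y = 0 by move=> y /negbTE; rewrite /f => ->.
have bal := @balance R n k pi m.+1 f nk st fz.
have L1 : \sum_(x <- boxs n m) pi x * Pf R k f x <= \sum_(x <- boxs n m.+2) pi x * Pf R k f x.
  apply: box_le; first lia.
  move=> x; apply: mulr_ge0 => //; exact: Pf_ge0.
have L2 : \sum_(x <- boxs n m) pi x * Pf R k f x =
    \sum_(x <- boxs n m) pi x * gg R x + d * Tb pi m - c * Ub pi m.
  rewrite /Tb /Ub mulr_sumr mulr_sumr -big_split -sumrB /=.
  rewrite big_seq [RHS]big_seq; apply: eq_bigr => x; rewrite mem_boxs => xm.
  have -> : Pf R k f x = Pf R k (@gg R n) x.
    rewrite /Pf; congr (_ + _).
      apply: eq_bigr => l _; rewrite /f (inbox_incr l xm) //.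
    by rewrite /f (@inboxW n m m.+1 (decr x) (leqnSn m) (inbox_decr xm)).
  by rewrite drift // /c /d; ring.
have L3 : \sum_(x <- boxs n m.+1) pi x * f x <=
    \sum_(x <- boxs n m) pi x * gg R x + B * (Tb pi m.+1 - Tb pi m).
  rewrite (@box_split R n m m.+1) //; apply: lerD.
    rewrite big_seq [X in _ <= X]big_seq; apply: ler_sum => x; rewrite mem_boxs => xm.
    by rewrite /f (@inboxW n m m.+1 x (leqnSn m) xm).
  rewrite T_split mulr_sumr big_seq_cond [X in _ <= X]big_seq_cond; apply: ler_sum => x.
  rewrite mem_boxs => /andP[xm _]; rewrite mulrC; apply: ler_wpM2r => //.
  by rewrite /f xm /B /d; apply: gg_box.
rewrite -bal in L1; have := le_trans L1 L3.
rewrite L2 /B /d; lra.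
Qed.

Lemma vnormE (R : realType) n (x : state n) : ((vnorm x)%:R : R) = Sr R x.
Proof. by rewrite /vnorm natr_sum. Qed.

Lemma vnorm_incr n (x : state n) l : vnorm (incr x l) = (vnorm x).+1.
Proof.
rewrite /vnorm (eq_bigr (fun i => x i + (i == l))%N); last by move=> i _; rewrite ffunE.
rewrite big_split /= -[X in _ = X]addn1; congr addn.
rewrite (bigD1 l) //= eqxx big1 ?addn0 // => i /negbTE ->.
by [].
Qed.

Lemma vnorm_decr n (x : state n) : nzeros x = 0%N ->
  vnorm x = (vnorm (decr x) + (n - 1))%N.
Proof.
move=> z; rewrite /vnorm (eq_bigr (fun i => (decr x) i + 1)%N); last first.
  move=> i _; rewrite ffunE addn1 prednK // lt0n; exact: (@nzeros0 _ x z i).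
by rewrite big_split /= sum_nat_const card_ord muln1.
Qed.

Lemma vnorm_coord n (x : state n) i : (x i <= vnorm x)%N.
Proof. by rewrite /vnorm (bigD1 i) //= leq_addr. Qed.

Lemma vnorm_box n N (x : state n) : inbox N x -> (vnorm x <= (n - 1) * N)%N.
Proof.
move=> /forallP H; rewrite /vnorm; apply: leq_trans (_ : \sum_(i < n - 1) N <= _)%N.
  by apply: leq_sum => i _.
by rewrite sum_nat_const card_ord.
Qed.

Lemma T_to1 (R : realType) n k (pi : state n -> R) (delta : R) :
  stationary k pi -> 0 < delta -> exists N, 1 - delta < Tb pi N.
Proof.
move=> st d0; case: (pselect (exists N, 1 - delta < Tb pi N)) => // H; exfalso.
have [p0 s1 _] := st.
have : (\esum_(x in [set: state n]) (pi x)%:E <= (1 - delta)%:E)%E.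
  apply: esum_le_box => // N; rewrite lee_fin leNgt; apply/negP => h; apply: H; by exists N.
rewrite s1 lee_fin; lra.
Qed.

Lemma kn_bound (R : realType) n (pi : state n -> R) m :
  (3 <= n)%N -> stationary n pi ->
  \sum_(x <- boxs n m.+1) pi x * (if (nzeros x != 0%N) && (vnorm x < m)%N then 1 else 0)
  <= (n - 1)%:R / n%:R * \sum_(x <- boxs n m.+1) pi x * (if (m <= vnorm x)%N then 1 else 0).
Proof.
move=> n3 st; have [p0 _ _] := st; have nk : (n <= n)%N by [].
have n0 : (n%:R : R) != 0 by rewrite pnatr_eq0; lia.
set f := fun y : state n => ((minn (vnorm y) m)%:R : R) - m%:R.
have fz : forall y, ~~ inbox m y -> f y = 0.
  move=> y /notinbox [i yi]; rewrite /f; have := vnorm_coord y i.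
  move=> h; rewrite (_ : minn (vnorm y) m = m) ?subrr //; lia.
have bal := @balance R n n pi m f nk st fz.
have eqf : \sum_(x <- boxs n m.+1) pi x * f x = \sum_(x <- boxs n m) pi x * f x.
  rewrite (@box_split R n m m.+1 (fun x => pi x * f x)) // [X in _ + X]big1 ?addr0 //.
  by move=> y /fz ->; rewrite mulr0.
have key : forall x : state n,
  pi x * ((if (nzeros x != 0%N) && (vnorm x < m)%N then 1 else 0)
          - (n - 1)%:R / n%:R * (if (m <= vnorm x)%N then 1 else 0))
  <= pi x * (Pf R n f x - f x).
  move=> x; apply: ler_wpM2l => //.
  rewrite /f (@Pf_subc R n n (fun y => ((minn (vnorm y) m)%:R : R))) // opprB addrA subrK.
  rewrite /Pf (eq_bigr (fun l => up_prob R n x l * (minn (vnorm x).+1 m)%:R)); last first.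
    by move=> l _; rewrite vnorm_incr.
  rewrite -mulr_suml.
  have rs := @rowsum R n n x n3 nk.
  case: (eqVneq (nzeros x) 0%N) => z.
    rewrite (eq_bigr (fun _ => 1 / n%:R)); last by move=> l _; rewrite up_R0.
    rewrite sumr_const card_ord /down_prob z eqxx /=.
    have hv := vnorm_decr z; rewrite hv.
    set s := vnorm (decr x).
    rewrite -[(1 / n%:R) *+ _]mulr_natl.
    have hn : (n%:R : R) = (n - 1)%:R + 1 by rewrite natrB ?subrK //; lia.
    set d : R := (n - 1)%:R.
    have d0 : 0 <= d by [].
    case: (ltnP (s + (n - 1)) m) => sm.
      rewrite mulr0 subr0 (_ : minn (s + (n - 1)).+1 m = (s + (n - 1)).+1); last lia.
      rewrite (_ : minn s m = s); last lia.
      rewrite [X in _ <= X](_ : _ = 0) //.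
      rewrite -[(s + (n - 1)).+1]addn1 !natrD hn -/d; field; lra.
    rewrite mulr1 (_ : minn (s + (n - 1)).+1 m = m); last lia.
    have hh : ((minn s m)%:R : R) >= m%:R - d by rewrite lerBlDr -natrD ler_nat; lia.
    rewrite hn; set a : R := (minn s m)%:R; set M : R := m%:R.
    rewrite -subr_ge0 (_ : _ - _ = (a - M + d) / (d + 1)); last by field; lra.
    apply: divr_ge0; lra.
  rewrite down_nz // mul0r addr0.
  have -> : \sum_(i < n - 1) up_prob R n x i = 1 by rewrite -rs down_nz // addr0.
  rewrite mul1r /=.
  case: (ltnP (vnorm x) m) => sm.
    rewrite (_ : minn (vnorm x).+1 m = (vnorm x).+1); last lia.
    rewrite mulr0 subr0 -addn1 natrD; lra.
  rewrite (_ : minn (vnorm x).+1 m = m); last lia.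
  rewrite subrr sub0r mulr1 oppr_le0; apply: divr_ge0 => //.
have H0 : \sum_(x <- boxs n m.+1) pi x * ((if (nzeros x != 0%N) && (vnorm x < m)%N then 1 else 0)
          - (n - 1)%:R / n%:R * (if (m <= vnorm x)%N then 1 else 0)) <= 0.
  apply: le_trans (_ : \sum_(x <- boxs n m.+1) pi x * (Pf R n f x - f x) <= _).
    by apply: ler_sum => x _; apply: key.
  by rewrite (eq_bigr (fun x => pi x * Pf R n f x - pi x * f x)) ?sumrB ?eqf ?bal ?subrr // => x _; rewrite mulrBr.
move: H0; rewrite (eq_bigr (fun x => pi x * (if (nzeros x != 0%N) && (vnorm x < m)%N then 1 else 0)
   - (n - 1)%:R / n%:R * (pi x * (if (m <= vnorm x)%N then 1 else 0)))); last first.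
  by move=> x _; rewrite mulrBr mulrCA.
by rewrite sumrB -mulr_sumr subr_le0.
Qed.

Lemma kn_nonR0 (R : realType) n (pi : state n -> R) (y : state n) :
  (3 <= n)%N -> stationary n pi -> nzeros y != 0%N -> pi y = 0.
Proof.
move=> n3 st yz; have [p0 _ _] := st.
set d : R := (n - 1)%:R.
have hn : (n%:R : R) = d + 1 by rewrite /d natrB ?subrK //; lia.
have H : forall delta : R, 0 < delta -> pi y <= d / n%:R * delta.
  move=> delta dp; have [N TN] := T_to1 st dp.
  set m := ((n - 1) * N + vnorm y).+1.
  have := @kn_bound R n pi m n3 st.
  set A := \sum_(x <- _) _; set Bm := \sum_(x <- _) _ => AB.
  have yA : pi y <= A.
    have := @sum_le_single R _ (boxs n m.+1)
      (fun x => pi x * (if (nzeros x != 0%N) && (vnorm x < m)%N then 1 else 0)) y (uniq_boxs n m.+1).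
    rewrite yz /= (_ : (vnorm y < m)%N) ?mulr1; last by rewrite /m; nia.
    apply.
      rewrite mem_boxs; apply/forallP => i; have := vnorm_coord y i; rewrite /m; nia.
    by move=> x; apply: mulr_ge0 => //; case: ifP.
  have BT : Bm + Tb pi N <= 1.
    apply: le_trans (T_le1 m.+1 st).
    apply: le_trans (_ : Bm + \sum_(x <- boxs n m.+1) pi x * (if (vnorm x < m)%N then 1 else 0) <= _).
      rewrite lerD2l; apply: le_trans (_ : \sum_(x <- boxs n N) pi x * (if (vnorm x < m)%N then 1 else 0) <= _).
        rewrite /Tb big_seq [X in _ <= X]big_seq; apply: ler_sum => x; rewrite mem_boxs => xN.
        have h := vnorm_box xN; have hm : (vnorm x < m)%N by rewrite /m; nia.
        by rewrite hm mulr1.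
      apply: box_le; first by rewrite /m; nia.
      by move=> x; apply: mulr_ge0 => //; case: ifP.
    rewrite /Bm /Tb -big_split /=; apply: ler_sum => x _.
    by rewrite -mulrDr; case: leqP => _; rewrite ?addr0 ?add0r mulr1.
  apply: le_trans yA _; apply: le_trans AB _; apply: ler_wpM2l.
    by apply: divr_ge0.
  lra.
apply/le_anti/andP; split; last exact: p0.
rewrite leNgt; apply/negP => py.
have := H (pi y) py.
have : d / n%:R < 1 by rewrite ltr_pdivrMr ?mul1r hn ?ltr_pwDr //; lra.
move=> h1 h2.
have : d / n%:R * pi y < pi y by rewrite -[X in _ < X]mul1r ltr_pM2r.
lra.
Qed.

Lemma P_decr_ge (R : realType) n k (x : state n) : (n <= k)%N ->
  down_prob R k x <= P R k x (decr x).
Proof.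
move=> nk; rewrite /P eqxx lerDr; apply: sumr_ge0 => l _.
by case: ifP => _ //; apply: up_ge0.
Qed.

Lemma kn_false (R : realType) n (pi : state n -> R) :
  (3 <= n)%N -> stationary n pi -> False.
Proof.
move=> n3 st; have [p0 _ _] := st.
have i0lt : (0 < n - 1)%N by lia.
set i0 : 'I_(n - 1) := Ordinal i0lt.
have Z : forall j (x : state n), x i0 = j -> pi x = 0.
  elim=> [|j IH] x xj.
    apply: kn_nonR0 => //; apply/negP => /eqP z.
    by have := @nzeros0 _ x z i0; rewrite xj.
  case: (eqVneq (nzeros x) 0%N) => z; last exact: kn_nonR0.
  have [N HN] := @seq_in_box n [:: x].
  have xN : inbox N x by apply: HN; rewrite mem_seq1.
  have e := @stat_fin R n n pi N (decr x) (leqnn n) st (inbox_decr xN).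
  have : pi x * down_prob R n x <= 0.
    rewrite -(IH (decr x)); last by rewrite ffunE xj.
    rewrite e; apply: le_trans (_ : pi x * P R n x (decr x) <= _).
      by apply: ler_wpM2l => //; apply: P_decr_ge.
    apply: (@sum_le_single R _ (boxs n N.+1) (fun z => pi z * P R n z (decr x))).
    - exact: uniq_boxs.
    - by rewrite mem_boxs; apply: (@inboxW n N N.+1).
    - by move=> w; apply: mulr_ge0 => //; apply: P_ge0.
  have dp := @down_gt0 R n n x n3 (leqnn n) z.
  move=> h; apply/le_anti/andP; split; last exact: p0.
  nra.
have hp : (0 : R) < 1 / 2 by rewrite divr_gt0.
have [N TN] := @T_to1 R n n pi (1 / 2) st hp.
have : Tb pi N = 0 by rewrite /Tb big1_seq // => x _; exact: (Z _ x erefl).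
move=> h; rewrite h in TN; lra.
Qed.

Lemma harmonic (R : realType) (a m : nat) : (1 <= a)%N ->
  (m%:R / 2 : R) <= \sum_(a <= i < 2 ^ m * a) 1 / i%:R.
Proof.
move=> a1; elim: m => [|m IH]; first by rewrite mul0r expn0 mul1n big_geq.
rewrite (@big_cat_nat _ _ _ (2 ^ m * a)) /=; last 2 first.
- by rewrite leq_pmull // expn_gt0.
- by rewrite leq_mul2r expnS leq_pmull ?orbT // expn_gt0.
have H2 : (1 / 2 : R) <= \sum_(2 ^ m * a <= i < 2 ^ m.+1 * a) 1 / i%:R.
  apply: le_trans (_ : \sum_(2 ^ m * a <= i < 2 ^ m.+1 * a) (1 / (2 ^ m.+1 * a)%:R : R) <= _).
    rewrite sumr_const_nat expnS -mulnA.
    have p : (0 < 2 ^ m * a)%N by rewrite muln_gt0 expn_gt0.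
    move: p; set q := (2 ^ m * a)%N => p.
    rewrite (_ : (2 * q - q = q)%N); last lia.
    rewrite -[_ *+ q]mulr_natl natrM.
    have q0 : (0 : R) < q%:R by rewrite ltr0n.
    by rewrite le_eqVlt; apply/orP; left; apply/eqP; field; rewrite gt_eqF.
  rewrite big_nat_cond [X in _ <= X]big_nat_cond; apply: ler_sum => i /andP[/andP[i1 i2] _].
  have ip : (0 < i)%N by apply: leq_trans i1; rewrite muln_gt0 expn_gt0.
  have h1 : (0:R) < i%:R by rewrite ltr0n.
  have h2 : (0:R) < (2 ^ m.+1 * a)%:R by rewrite ltr0n muln_gt0 expn_gt0.
  rewrite !div1r lef_pV2 ?posrE // ler_nat; exact: ltnW.
rewrite -[m.+1]addn1 natrD mulrDl; apply: lerD => //.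
by rewrite addn1.
Qed.

Lemma U_ge0 (R : realType) n k (pi : state n -> R) N : stationary k pi -> 0 <= Ub pi N.
Proof. move=> [p0 _ _]; apply: sumr_ge0 => x _; apply: mulr_ge0 => //; exact: Sr_ge0. Qed.

Lemma core (R : realType) n k (pi : state n -> R) (delta : R) :
  (3 <= n)%N -> (n < k)%N -> stationary k pi -> 0 < delta ->
  (forall N, Ub pi N <= (n - 1)%:R / (2 * (k%:R - n%:R) / k%:R) - delta) -> False.
Proof.
move=> n3 nk st dp HU.
have nk' : (n <= k)%N by lia.
set c : R := 2 * (k%:R - n%:R) / k%:R; set d : R := (n - 1)%:R.
have c0 : 0 < c.
  rewrite /c; apply: divr_gt0; last by rewrite ltr0n; lia.
  by apply: mulr_gt0 => //; rewrite subr_gt0 ltr_nat.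
have d0 : 0 < d by rewrite /d ltr0n; lia.
have n0 : (0 : R) < n%:R by rewrite ltr0n; lia.
have e'0 : 0 < c * delta / (2 * d) by apply: divr_gt0; [apply: mulr_gt0|apply: mulr_gt0].
have [J TJ] := T_to1 st e'0.
set eps : R := c * delta / (2 * (n%:R * d)).
have eps0 : 0 < eps by apply: divr_gt0; [apply: mulr_gt0|apply: mulr_gt0 => //; apply: mulr_gt0].
have step : forall m, (J <= m)%N -> Ub pi m + eps * (1 / (m.+1)%:R) <= Ub pi m.+1.
  move=> m Jm; apply: le_trans (shell m st); rewrite lerD2l.
  have hB := boundB m n3 nk' st; rewrite -/c -/d in hB.
  have hT : Tb pi J <= Tb pi m by apply: box_le => // x; have [p0 _ _] := st.
  have hU := HU m.
  have hcU : c * Ub pi m <= d - c * delta.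
    move: (ler_wpM2l (ltW c0) hU); rewrite mulrBr [c * (d / c)]mulrC divfK //.
    by rewrite gt_eqF.
  have m0 : (0 : R) < (m.+1)%:R by rewrite ltr0n.
  set D := Tb pi m.+1 - Tb pi m in hB *.
  have hd : c * delta / 2 <= n%:R * (d * (m.+1)%:R ^+ 2) * D.
    apply: le_trans hB; have : d * (c * delta / (2 * d)) = c * delta / 2.
      by field; rewrite gt_eqF.
    nra.
  rewrite /eps; rewrite ler_pdivrMr in hd => //.
  have pos : 0 < 2 * (n%:R * d) * (m.+1)%:R by apply: mulr_gt0 => //; apply: mulr_gt0 => //; apply: mulr_gt0.
  rewrite -(ler_pM2r pos).
  have -> : c * delta / (2 * (n%:R * d)) * (1 / (m.+1)%:R) * (2 * (n%:R * d) * (m.+1)%:R) = c * delta.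
    by field; rewrite !gt_eqF //; apply: mulr_gt0.
  apply: le_trans hd _; rewrite le_eqVlt; apply/orP; left; apply/eqP; ring.
have grow : forall i, eps * \sum_(J.+1 <= M < (J + i).+1) 1 / M%:R <= Ub pi (J + i).
  elim=> [|i IH]; first by rewrite addn0 big_geq ?mulr0 //; exact: (U_ge0 _ st).
  rewrite big_nat_recr /=; last lia.
  rewrite mulrDr addnS; apply: le_trans (step _ _); last lia.
  by rewrite lerD2r.
have [p Hp] : exists p : nat, 2 * (d / c) / eps < p%:R.
  exists (Num.Def.archi_bound (2 * (d / c) / eps)); apply: archi_boundP.
  by apply: divr_ge0; [apply: mulr_ge0 => //; apply: divr_ge0; apply: ltW|apply: ltW].
have ha := @harmonic R J.+1 p (ltn0Sn J).
set i := (2 ^ p * J.+1 - J.+1)%N.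
have hi : (J + i).+1 = (2 ^ p * J.+1)%N.
  rewrite /i; have : (J.+1 <= 2 ^ p * J.+1)%N by rewrite leq_pmull // expn_gt0.
  lia.
have := grow i; rewrite hi => g.
have hUi := HU (J + i).
have : eps * (p%:R / 2) <= Ub pi (J + i).
  apply: le_trans g; apply: ler_wpM2l => //; exact: ltW.
move: Hp; rewrite ltr_pdivrMr // => Hp.
have cpos : 0 <= d / c by apply: divr_ge0; apply: ltW.
move=> h; rewrite -/c -/d in hUi; nra.
Qed.

Unset Implicit Arguments. Set Strict Implicit.

Theorem proposition6p1 (R : realType) (n k : nat) :
  (3 <= n)%N -> (n <= k)%N ->
  stable R n k ->
  forall pi : state n -> R, stationary k pi ->
  mean_norm pi = ((k%:R * (n - 1)%:R) / (2 * (k%:R - n%:R)) : R)%:E.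
Proof.
move=> n3 nk _ pi st.
case: (ltnP n k) => nk'; last first.
  have kn : k = n by lia.
  subst k; exfalso; exact: (kn_false n3 st).
have [p0 _ _] := st.
set c : R := 2 * (k%:R - n%:R) / k%:R; set d : R := (n - 1)%:R.
have c0 : 0 < c.
  rewrite /c; apply: divr_gt0; last by rewrite ltr0n; lia.
  by apply: mulr_gt0 => //; rewrite subr_gt0 ltr_nat.
have hmean : mean_norm pi = \esum_(x in [set: state n]) (pi x * Sr R x)%:E.
  by rewrite /mean_norm; apply: eq_esum => x _; rewrite vnormE.
have target : (k%:R * (n - 1)%:R) / (2 * (k%:R - n%:R)) = d / c.
  have k0 : (k%:R : R) != 0 by rewrite pnatr_eq0; lia.
  have kn0 : (k%:R - n%:R : R) != 0 by rewrite subr_eq0 eqr_nat; lia.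
  by rewrite /c /d; field; rewrite k0 kn0.
rewrite hmean target.
apply/le_anti/andP; split.
  apply: esum_le_box => [x|N]; first by apply: mulr_ge0 => //; exact: Sr_ge0.
  rewrite lee_fin ler_pdivlMr // mulrC.
  exact: (@boundA R n k pi N n3 nk st).
rewrite leNgt; apply/negP => hE.
set E := esum _ _ in hE.
have E0 : (0 <= E)%E by apply: esum_ge0 => x _; rewrite lee_fin mulr_ge0 // Sr_ge0.
have Efin : E \is a fin_num by rewrite ge0_fin_numE // (lt_trans hE) // ltry.
have Ee := fineK Efin; set e := fine E in Ee.
apply: (@core R n k pi (d / c - e) n3 nk' st).
  by rewrite subr_gt0 -lte_fin Ee.
move=> N; rewrite -/c -/d opprB addrC subrK.
have := @esum_ge_seq R _ (fun x => pi x * Sr R x) (boxs n N) (uniq_boxs n N).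
by rewrite -/E -Ee lee_fin.
Qed.
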